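(* Let $p>1$ and let $f:\mathbb{N}\to\mathbb{R}_{\geq 0}$ be a concave function such that $n\mapsto \frac{f(n)^p}{n}$ is non-decreasing. Let $M=\{m_1,m_2,\dots,m_{2k}\}$ be a finite subset of $\mathbb{N}$ with $m_i<m_{i+1}$ for all $i$ and $m_1\geq 1$. Then \[ \sum_{i=1}^{k} \frac{f(m_{2i})^p}{m_{2i}}\,(m_{2i}-m_{2i-1}) \;\geq\; \left(\tfrac{1}{2}\right)^{3+p} f\Big(\sum_{i=1}^{k} (m_{2i}-m_{2i-1})\Big)^p. \]
   Context: A function $f:\mathbb{N}\to\mathbb{R}_{\geq 0}$ is called concave if $f$ is non-decreasing and for all $m,n\in\mathbb{N}$ with $n\geq m$ one has $f(n+m)-f(n)\leq f(n)-f(n-m)$. *)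

(* Defs.v *)
From HB Require Import structures.
From mathcomp Require Import all_boot all_order all_algebra.
From mathcomp Require Import reals exp.
Set Implicit Arguments. Unset Strict Implicit. Unset Printing Implicit Defensive.
Import Order.TTheory GRing.Theory Num.Theory.
Local Open Scope ring_scope.

Definition nonneg_fun {R : realType} (f : nat -> R) : Prop :=
  forall n : nat, 0 <= f n.

(* Concave as in the paper: non-decreasing and
   f(n+m) - f(n) <= f(n) - f(n-m) for all m <= n. *)
Definition concave {R : realType} (f : nat -> R) : Prop :=
  (forall a b : nat, (a <= b)%N -> f a <= f b) /\
  (forall m n : nat, (m <= n)%N -> f (n + m)%N - f n <= f n - f (n - m)%N).

(* Main.v *)
Require Import Defs.
From HB Require Import structures.
From mathcomp Require Import all_boot all_order all_algebra.
From mathcomp Require Import reals exp.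
From mathcomp Require Import zify lra.
Import Order.TTheory GRing.Theory Num.Theory.
Local Open Scope ring_scope.

Lemma cnt (d : nat -> nat) (D n : nat) :
  (\sum_(1 <= i < n.+1 | (2 * \sum_(1 <= j < i.+1) d j < D)%N) d i <= \sum_(1 <= j < n.+1) d j)%N /\
  ((\sum_(1 <= i < n.+1 | (2 * \sum_(1 <= j < i.+1) d j < D)%N) d i = 0)%N \/
   (2 * \sum_(1 <= i < n.+1 | (2 * \sum_(1 <= j < i.+1) d j < D)%N) d i < D)%N).
Proof.
elim: n => [|n [IH1 IH2]]; first by rewrite !big_geq //; split => //; left.
rewrite big_mkcond /= big_nat_recr //= -big_mkcond /=.
rewrite [X in (_ <= X)%N]big_nat_recr //=.
have E : (\sum_(1 <= j < n.+2) d j = \sum_(1 <= j < n.+1) d j + d n.+1)%N by rewrite big_nat_recr.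
case: ifP; rewrite E => H; rewrite ?addn0; split; try lia.

Qed.

Lemma Sle (m : nat -> nat) (k : nat) :
  (forall i : nat, (1 <= i)%N -> (i < 2 * k)%N -> (m i < m i.+1)%N) ->
  forall n, (n <= k)%N -> (\sum_(1 <= i < n.+1) (m (2 * i)%N - m (2 * i).-1)%N <= m (2 * n))%N.
Proof.
move=> Hm; elim=> [|n IH] Hn; first by rewrite big_geq.
have E : (\sum_(1 <= i < n.+2) (m (2 * i)%N - m (2 * i).-1) = 
   \sum_(1 <= i < n.+1) (m (2 * i)%N - m (2 * i).-1) + (m (2 * n.+1)%N - m (2 * n.+1).-1))%N
  by rewrite big_nat_recr.
rewrite E.
have h1 := IH (ltnW Hn).
have e : (2 * n.+1).-1 = (2 * n).+1 by lia.
rewrite e.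
case: n IH Hn h1 e E => [|n] IH Hn h1 e E; first by rewrite big_geq //; lia.
have := Hm (2 * n.+1).+1%N ltac:(lia) ltac:(lia).
have := Hm (2 * n.+1)%N ltac:(lia) ltac:(lia).
move=> H H'; clear E.
have e3 : ((2 * n.+1).+2 = 2 * n.+2)%N by lia.
rewrite e3 in H'; move: h1 H H'.
generalize (\sum_(1 <= i < n.+2) (m (2 * i) - m (2 * i).-1))%N (m (2 * n.+2)%N) (m (2 * n.+1)%N) (m (2 * n.+1).+1).
move=> a b c d0 h1 h2 h3; lia.
Qed.

Lemma conc2 (R : realType) (f : nat -> R) : nonneg_fun f -> concave f ->
  forall a b : nat, (a <= b)%N -> (b <= 2 * a)%N -> f b <= 2 * f a.
Proof.
move=> f0 [_ fc] a b ab ba.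
have := fc (b - a)%N a ltac:(lia).
have -> : (a + (b - a))%N = b by lia.
have := f0 (a - (b - a))%N.
lra.
Qed.

Theorem lemma2p2 (R : realType) (p : R) (f : nat -> R) (k : nat) (m : nat -> nat) :
  1 < p ->
  nonneg_fun f ->
  concave f ->
  (forall a b : nat, (1 <= a)%N -> (a <= b)%N ->
     (f a `^ p) / a%:R <= (f b `^ p) / b%:R) ->
  (0 < k)%N ->
  (1 <= m 1%N)%N ->
  (forall i : nat, (1 <= i)%N -> (i < 2 * k)%N -> (m i < m i.+1)%N) ->
  \sum_(1 <= i < k.+1) (f (m (2 * i)%N) `^ p) / (m (2 * i)%N)%:R
                        * ((m (2 * i)%N - m (2 * i).-1)%N)%:R
  >= (1 / 2) `^ (3 + p) * f (\sum_(1 <= i < k.+1) (m (2 * i)%N - m (2 * i).-1)%N) `^ p.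
Proof.
move=> p1 f0 fcc Hg k0 m1 Hm.
have fmono := fcc.1.
pose d := fun i => (m (2 * i)%N - m (2 * i).-1)%N.
have dpos : forall i, (1 <= i)%N -> (i <= k)%N -> (1 <= d i)%N.
  move=> i i1 ik; rewrite /d; have := Hm (2*i).-1%N ltac:(lia) ltac:(lia).
  have -> : ((2*i).-1.+1 = 2*i)%N by lia.
  lia.
pose S j := (\sum_(1 <= i < j.+1) d i)%N.
have SleM : forall i, (i <= k)%N -> (S i <= m (2*i))%N := @Sle m k Hm.
have Smono : forall a b, (a <= b)%N -> (S a <= S b)%N.
  move=> a b ab; rewrite /S [X in (_ <= X)%N](@big_cat_nat _ _ _ a.+1) //=; exact: leq_addr.
have S1 : forall i, (1 <= i)%N -> (i <= k)%N -> (1 <= S i)%N.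
  move=> i i1 ik; apply: leq_trans (Smono 1%N i i1); rewrite /S big_nat1; exact: dpos.
pose D := S k.
have D1 : (1 <= D)%N by apply: S1.
pose h : R := 1 / 2.
pose c := (f D * h) `^ p / D%:R.
have c0 : 0 <= c by rewrite divr_ge0 ?powR_ge0.
have step1 : forall i, (1 <= i < k.+1)%N ->
   (if (D <= 2 * S i)%N then c * (d i)%:R else 0) <=
   (f (m (2 * i)%N) `^ p) / (m (2 * i)%N)%:R * (d i)%:R.
  move=> i /andP[i1 ik].
  case: ifP => HD; last by rewrite mulr_ge0 ?divr_ge0 ?powR_ge0.
  apply: ler_wpM2r => //.
  apply: le_trans (Hg (S i) (m (2 * i)%N) (S1 i i1 ik) (SleM i ik)).
  have SD : (S i <= D)%N by apply: Smono.
  apply: ler_pM.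
  - by rewrite powR_ge0.
  - by rewrite invr_ge0.
  - apply: ge0_ler_powR; rewrite ?nnegrE; first lra.
    + rewrite mulr_ge0 //; rewrite /h; lra.
    + exact: f0.
    + have := @conc2 R f f0 fcc _ _ SD HD; rewrite /h; lra.
  - rewrite lef_pV2 ?posrE ?ltr0n ?ler_nat //; lia.
pose A := (\sum_(1 <= i < k.+1 | (D <= 2 * S i)%N) d i)%N.
have step2 : \sum_(1 <= i < k.+1) (if (D <= 2 * S i)%N then c * (d i)%:R else 0) = c * A%:R.
  rewrite /A natr_sum mulr_sumr [RHS]big_mkcond /=; apply: eq_bigr => i _.
  by case: ifP.
have step3 : (D <= 2 * A)%N.
  have [_ cn] := cnt d D k.
  have E : (S k = A + \sum_(1 <= i < k.+1 | (2 * S i < S k)%N) d i)%N.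
    rewrite {1}/S (bigID (fun i => (D <= 2 * S i)%N)) /=; congr (_ + _)%N.
    by apply: (eq_bigl (fun i => (2 * S i < S k)%N)) => i; rewrite ltnNge.
  pose B := (\sum_(1 <= i < k.+1 | (2 * S i < S k)%N) d i)%N.
  have cn' : (B = 0 \/ 2 * B < D)%N by exact: cn.
  have E' : (D = A + B)%N by exact: E.
  lia.
have LB : c * A%:R <= \sum_(1 <= i < k.+1) (f (m (2 * i)%N) `^ p) / (m (2 * i)%N)%:R * (d i)%:R.
  rewrite -step2; apply: ler_sum_nat => i Hi; exact: step1.
apply: le_trans _ LB.
change (h `^ (3 + p) * f D `^ p <= c * A%:R).
have hD : 0 < D%:R :> R by rewrite ltr0n.
have cD : c * D%:R = f D `^ p * h `^ p.
  rewrite /c divfK ?gt_eqF // powRM // /h; lra.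
have cA : c * D%:R <= 2 * (c * A%:R).
  rewrite mulrCA -natrM; apply: ler_wpM2l => //; rewrite ler_nat; lia.
have pw : h `^ (3 + p) = h ^+ 3 * h `^ p.
  rewrite powRD; last by apply/implyP => _; rewrite /h div1r invr_eq0 pnatr_eq0.
  by rewrite -powR_mulrn // /h; lra.
have h3 : h ^+ 3 = 1 / 8 by rewrite /h; lra.
have F0 : 0 <= f D `^ p * h `^ p by rewrite mulr_ge0 ?powR_ge0.
rewrite pw h3; lra.
Qed.
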